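(* For $f>1$ let $h^*=h^*(f)>1$ and $h_*=h_*(f)\in(0,1)$ be the two solutions $h$ of $h-\log h=f$, and define $$j^*(f)=\frac1{h^*-1}-\frac1{(2(f-1))^{1/2}},\qquad j_*(f)=\frac1{1-h_*}-\frac1{(2(f-1))^{1/2}}.$$ Then: (a) as $f\to1$, $j^*\to-\frac13$ and $j_*\to\frac13$; (b) $\frac{dj^*}{df}>0$ and $\frac{dj_*}{df}>0$ for $f>1$, and $\frac{dj^*}{df}=O((f-1)^{-1/2})$, $\frac{dj_*}{df}=O((f-1)^{-1/2})$ as $f\to1$; (c) $\frac{d^2j^*}{df^2}<0$ and $\frac{d^2j_*}{df^2}<0$ for $f>1$; (d) the function $j^*+j_*=\frac1{h^*-1}+\frac1{1-h_*}-\big(\frac2{f-1}\big)^{1/2}$ satisfies $\frac{d(j^*+j_* )}{df}>0$ and $\frac{d^2(j^*+j_* )}{df^2}<0$ for $f>1$, and $j^*+j_*\to0$, $\frac{d(j^*+j_* )}{df}=O((f-1)^{-1/2})$ as $f\to1$; (e) $0<j^*+j_*<1$ for $f>1$. *)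

(* Defs.v *)
From Stdlib Require Import Reals ClassicalEpsilon.
From Coquelicot Require Import Coquelicot.
Open Scope R_scope.

(* h^*(f): the solution h > 1 of h - ln h = f (chosen by Hilbert epsilon;
   for f > 1 it exists and is unique). *)
Definition hup (f : R) : R :=
  epsilon (inhabits 0) (fun h => 1 < h /\ h - ln h = f).

Definition hlo (f : R) : R :=
  epsilon (inhabits 0) (fun h => 0 < h < 1 /\ h - ln h = f).

Definition jup (f : R) : R := / (hup f - 1) - / sqrt (2 * (f - 1)).
Definition jlo (f : R) : R := / (1 - hlo f) - / sqrt (2 * (f - 1)).
Definition jsum (f : R) : R := jup f + jlo f.

Definition bigO_inv_sqrt_at1 (g : R -> R) : Prop :=
  exists C delta : R, 0 < delta /\
    forall f, 1 < f < 1 + delta -> Rabs (g f) <= C * / sqrt (f - 1).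

(* Main.v *)
Require Import Defs.
From Stdlib Require Import Reals.
From Coquelicot Require Import Coquelicot.
From Stdlib Require Import Lra Psatz ClassicalEpsilon FunctionalExtensionality.
Open Scope R_scope.


Definition phi (h : R) := h - ln h.

Lemma ln_lt_xm1 x : 0 < x -> x <> 1 -> ln x < x - 1.
Proof.
  intros Hx H1. assert (ln x <> 0) by (apply ln_neq_0; auto).
  pose proof (exp_ineq1 (ln x) H). rewrite exp_ln in H0; lra.
Qed.

Lemma phi_incr a b : 1 <= a -> a < b -> phi a < phi b.
Proof.
  intros Ha Hab. unfold phi.
  assert (ln (b / a) < b / a - 1).
  { apply ln_lt_xm1. apply Rdiv_lt_0_compat; lra.
    intro E. apply Rmult_eq_compat_r with (r := a) in E.
    unfold Rdiv in E. rewrite Rmult_assoc, Rinv_l in E; lra. }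
  rewrite ln_div in H by lra.
  assert (b / a - 1 <= b - a).
  { apply Rmult_le_reg_r with a; [lra|]. unfold Rdiv.
    replace ((b * / a - 1) * a) with (b - a) by (field; lra). nra. }
  lra.
Qed.

Lemma phi_decr a b : 0 < a -> a < b -> b <= 1 -> phi b < phi a.
Proof.
  intros Ha Hab Hb. unfold phi.
  assert (ln (a / b) < a / b - 1).
  { apply ln_lt_xm1. apply Rdiv_lt_0_compat; lra.
    intro E. apply Rmult_eq_compat_r with (r := b) in E.
    unfold Rdiv in E. rewrite Rmult_assoc, Rinv_l in E; lra. }
  rewrite ln_div in H by lra.
  assert (b - a <= 1 - a / b).
  { apply Rmult_le_reg_r with b; [lra|]. unfold Rdiv.
    replace ((1 - a * / b) * b) with (b - a) by (field; lra). nra. }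
  lra.
Qed.

Lemma cont_of_derive f x l : is_derive f x l -> continuity_pt f x.
Proof.
  intro H. apply derivable_continuous_pt. exists l. apply is_derive_Reals. exact H.
Qed.

Lemma exp_gt_2x f : 1 < f -> 2 * f < exp f.
Proof.
  intro Hf. assert (1 + f/2 < exp (f/2)) by (apply exp_ineq1; lra).
  assert (E : exp f = exp (f/2) * exp (f/2)) by (rewrite <- exp_plus; f_equal; lra).
  rewrite E. remember (exp (f/2)) as e.
  assert (0 < (e - (1 + f/2)) * (e + (1 + f/2))) by (apply Rmult_lt_0_compat; lra).
  pose proof (Rle_0_sqr (1 - f/2)). unfold Rsqr in *. lra.
Qed.

Lemma hup_ex f : 1 < f -> exists h, 1 < h /\ h - ln h = f.
Proof.
  intro Hf.
  assert (Hlt : 1 < exp f) by (pose proof (exp_gt_2x f Hf); lra).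
  destruct (Ranalysis5.IVT_interv (fun h => h - ln h - f) 1 (exp f)) as [z [Hz Ez]].
  - intros a Ha. apply (cont_of_derive _ _ (1 - / a)). auto_derive; [lra|field; lra].
  - exact Hlt.
  - rewrite ln_1; lra.
  - rewrite ln_exp. pose proof (exp_gt_2x f Hf); lra.
  - exists z. split; [|lra]. destruct Hz as [Hz1 _]. destruct (Req_dec z 1) as [->|]; [rewrite ln_1 in Ez; lra| lra].
Qed.

Lemma hlo_ex f : 1 < f -> exists h, 0 < h < 1 /\ h - ln h = f.
Proof.
  intro Hf.
  assert (Hlt : exp (- f) < 1) by (rewrite <- exp_0; apply exp_increasing; lra).
  assert (Hp : 0 < exp (- f)) by apply exp_pos.
  destruct (Ranalysis5.IVT_interv (fun h => - (h - ln h - f)) (exp (-f)) 1) as [z [Hz Ez]].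
  - intros a Ha. apply (cont_of_derive _ _ (- (1 - / a))). auto_derive; [lra|field; lra].
  - exact Hlt.
  - rewrite ln_exp. lra.
  - rewrite ln_1; lra.
  - exists z. split; [|lra]. destruct Hz as [Hz1 Hz2]. destruct (Req_dec z 1) as [->|]; [rewrite ln_1 in Ez; lra| lra].
Qed.

Lemma hup_spec f : 1 < f -> 1 < hup f /\ phi (hup f) = f.
Proof.
  intro Hf. unfold hup. apply epsilon_spec. apply hup_ex; auto.
Qed.

Lemma hlo_spec f : 1 < f -> 0 < hlo f < 1 /\ phi (hlo f) = f.
Proof.
  intro Hf. unfold hlo. apply epsilon_spec. apply hlo_ex; auto.
Qed.

Lemma phi_1 : phi 1 = 1.
Proof. unfold phi; rewrite ln_1; lra. Qed.

Lemma hup_unique h : 1 < h -> hup (phi h) = h.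
Proof.
  intro Hh. assert (Hf : 1 < phi h) by (rewrite <- phi_1; apply phi_incr; lra).
  destruct (hup_spec _ Hf) as [H1 H2].
  destruct (Rtotal_order (hup (phi h)) h) as [Hl|[He|Hg]]; auto.
  - apply phi_incr in Hl; lra.
  - apply phi_incr in Hg; lra.
Qed.

Lemma hlo_unique h : 0 < h < 1 -> hlo (phi h) = h.
Proof.
  intro Hh. assert (Hf : 1 < phi h) by (rewrite <- phi_1; apply phi_decr; lra).
  destruct (hlo_spec _ Hf) as [H1 H2].
  destruct (Rtotal_order (hlo (phi h)) h) as [Hl|[He|Hg]]; auto.
  - apply phi_decr in Hl; lra.
  - apply phi_decr in Hg; lra.
Qed.

Lemma inv_deriv (psi dpsi K : R -> R) (lo hi z : R) :
 (forall h, lo < h < hi -> derivable_pt_lim psi h (dpsi h)) ->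
 (forall x y, lo < x -> x < y -> y < hi -> psi x < psi y) ->
 (forall h, lo < h < hi -> K (psi h) = h) ->
 lo < K z < hi -> psi (K z) = z -> dpsi (K z) <> 0 ->
 continuity_pt K z /\ derivable_pt_lim K z (/ dpsi (K z)).
Proof.
  intros Hd Hi Hk Hz Ez Hnz.
  set (k := K z) in *.
  set (lb := (lo + k)/2). set (ub := (k + hi)/2).
  assert (Hlb : lo < lb < k) by (unfold lb; lra).
  assert (Hub : k < ub < hi) by (unfold ub; lra).
  assert (Hc : forall a, lo < a < hi -> continuity_pt psi a).
  { intros a Ha. apply derivable_continuous_pt. exists (dpsi a). apply Hd; auto. }
  assert (Cl : forall w, psi lb <= w <= psi ub -> lb <= K w <= ub /\ psi (K w) = w).
  { intros w [Hw1 Hw2].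
    destruct (Rle_lt_or_eq_dec _ _ Hw1) as [Hw1'|Hw1'].
    2:{ subst w. rewrite Hk by lra. lra. }
    destruct (Rle_lt_or_eq_dec _ _ Hw2) as [Hw2'|Hw2'].
    2:{ subst w. rewrite Hk by lra. lra. }
    destruct (Ranalysis5.IVT_interv (fun h => psi h - w) lb ub) as [h [Hh Eh]].
    - intros a Ha. apply continuity_pt_minus; [apply Hc; lra| apply continuity_pt_const; intros ? ?; auto].
    - lra.
    - lra.
    - lra.
    - assert (psi h = w) by lra. subst w. rewrite Hk by lra. lra. }
  assert (Hcont : continuity_pt K z).
  { apply (Ranalysis5.continuity_pt_recip_interv psi K lb ub).
    - lra.
    - intros x y ? ? ?. apply Hi; lra.
    - intros x ? ?. unfold comp, id. apply Cl; lra.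
    - intros x ? ?. apply Cl; lra.
    - intros a Ha. apply Hc; lra.
    - rewrite <- Ez. split; apply Hi; lra. }
  split; [exact Hcont|].
  assert (Klb : K (psi lb) = lb) by (apply Hk; lra).
  assert (Kub : K (psi ub) = ub) by (apply Hk; lra).
  assert (Prf : forall a, K (psi lb) <= a <= K (psi ub) -> derivable_pt psi a).
  { intros a Ha. rewrite Klb, Kub in Ha. exists (dpsi a). apply Hd; lra. }
  assert (Pz : psi lb < z < psi ub) by (rewrite <- Ez; split; apply Hi; lra).
  assert (Pinc : K (psi lb) <= K z <= K (psi ub)) by (rewrite Klb, Kub; fold k; lra).
  assert (Hder := Ranalysis5.derivable_pt_lim_recip_interv psi K (psi lb) (psi ub) z Prf Hcont
    ltac:(lra) Pz Pinc).
  assert (E : derive_pt psi (K z) (Prf (K z) Pinc) = dpsi (K z)).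
  { apply derive_pt_eq_0. apply Hd. fold k. lra. }
  rewrite E in Hder. fold k in Hder. replace (/ dpsi k) with (1 / dpsi k) by (field; auto).
  apply Hder.
  - intros x0 Hx0. unfold comp, id. apply Cl. lra.
  - fold k. auto.
Qed.

Lemma phi_dlim h : 0 < h -> derivable_pt_lim phi h (1 - / h).
Proof.
  intro Hh. apply is_derive_Reals. unfold phi. auto_derive; [lra|field; lra].
Qed.

Lemma hup_deriv f : 1 < f -> is_derive hup f (hup f / (hup f - 1)).
Proof.
  intro Hf. destruct (hup_spec f Hf) as [H1 H2].
  destruct (inv_deriv phi (fun h => 1 - / h) hup 1 (hup f + 1) f) as [_ D].
  - intros h Hh. apply phi_dlim; lra.
  - intros x y ? ? ?. apply phi_incr; lra.
  - intros h Hh. apply hup_unique; lra.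
  - lra.
  - auto.
  - intro E. assert (/ hup f = 1) by lra. 
    assert (hup f = 1) by (rewrite <- (Rinv_inv (hup f)), H; apply Rinv_1). lra.
  - apply is_derive_Reals. replace (hup f / (hup f - 1)) with (/ (1 - / hup f)) by (field; lra).
    exact D.
Qed.

Lemma hlo_deriv f : 1 < f -> is_derive hlo f (hlo f / (hlo f - 1)).
Proof.
  intro Hf. destruct (hlo_spec f Hf) as [H1 H2].
  destruct (inv_deriv (fun h => - phi h) (fun h => - (1 - / h)) (fun w => hlo (- w)) 0 1 (- f)) as [_ D].
  - intros h Hh. apply derivable_pt_lim_opp. apply phi_dlim; lra.
  - intros x y ? ? ?. apply Ropp_lt_contravar. apply phi_decr; lra.
  - intros h Hh. rewrite Ropp_involutive. apply hlo_unique; lra.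
  - rewrite Ropp_involutive; lra.
  - rewrite Ropp_involutive, H2; auto.
  - rewrite Ropp_involutive. intro E. assert (/ hlo f = 1) by lra. 
    assert (hlo f = 1) by (rewrite <- (Rinv_inv (hlo f)), H; apply Rinv_1). lra.
  - rewrite Ropp_involutive in D.
    assert (D' : is_derive (fun w => hlo (- w)) (- f) (/ - (1 - / hlo f))) by (apply is_derive_Reals; exact D).
    assert (C := is_derive_comp (fun w => hlo (- w)) (fun x => - x) f _ (-1) D').
    assert (C' : is_derive (fun x => - x) f (-1)) by (auto_derive; auto; lra).
    specialize (C C').
    assert (E : scal (-1) (/ - (1 - / hlo f)) = hlo f / (hlo f - 1)).
    { unfold scal; simpl; unfold mult; simpl. field. split; [|lra].
      intro E. assert (hlo f = 1) by (apply Rmult_eq_reg_r with (/ hlo f); [field_simplify; lra| apply Rinv_neq_0_compat; lra]). lra. }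
    apply is_derive_Reals in C. apply is_derive_Reals. rewrite <- E.
    eapply derivable_pt_lim_ext; [|exact C].
    intro t; simpl. now rewrite Ropp_involutive.
Qed.

Lemma cmp_right (F dF : R -> R) (b : R) :
  (forall x, 1 <= x < b -> derivable_pt_lim F x (dF x)) ->
  (forall x, 1 < x < b -> 0 < dF x) -> F 1 = 0 ->
  forall h, 1 < h < b -> 0 < F h.
Proof.
  intros Hd Hs H1 h Hh.
  destruct (MVT_cor2 F dF 1 h) as [c [Ec Hc]]; [lra| intros c Hc; apply Hd; lra|].
  assert (0 < dF c) by (apply Hs; lra). nra.
Qed.

Lemma cmp_left (F dF : R -> R) (a : R) :
  (forall x, a < x <= 1 -> derivable_pt_lim F x (dF x)) ->
  (forall x, a < x < 1 -> dF x < 0) -> F 1 = 0 ->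
  forall h, a < h < 1 -> 0 < F h.
Proof.
  intros Hd Hs H1 h Hh.
  destruct (MVT_cor2 F dF h 1) as [c [Ec Hc]]; [lra| intros c Hc; apply Hd; lra|].
  assert (dF c < 0) by (apply Hs; lra). nra.
Qed.

Lemma cmp_both (F dF : R -> R) :
  (forall x, 0 < x -> derivable_pt_lim F x (dF x)) ->
  (forall x, 0 < x < 1 -> dF x < 0) ->
  (forall x, 1 < x -> 0 < dF x) -> F 1 = 0 ->
  forall h, 0 < h -> h <> 1 -> 0 < F h.
Proof.
  intros Hd Hl Hr H1 h Hh Hn.
  destruct (Rtotal_order h 1) as [Hlt|[?|Hgt]]; [|lra|].
  - apply (cmp_left F dF 0); auto. intros x Hx; apply Hd; lra.
  - apply (cmp_right F dF (h+1)); auto; try lra.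
    intros x Hx; apply Hd; lra. intros x Hx; apply Hr; lra.
Qed.

Definition gg (h : R) := 2 * (h - 1 - ln h).

Lemma gg_pos h : 0 < h -> h <> 1 -> 0 < gg h.
Proof. intros. unfold gg. pose proof (ln_lt_xm1 h H H0). lra. Qed.

Lemma exp3 a : exp a ^ 3 = exp (3 * a).
Proof. replace (3 * a) with (a + a + a) by ring. rewrite !exp_plus. ring. Qed.

Lemma exp5 a : exp a ^ 5 = exp (5 * a).
Proof. replace (5 * a) with (a + a + a + a + a) by ring. rewrite !exp_plus. ring. Qed.

Lemma sqr_pos y : y <> 0 -> 0 < y ^ 2.
Proof. intro. replace (y^2) with (Rsqr y) by (unfold Rsqr; ring). apply Rsqr_pos_lt; auto. Qed.

Lemma sq_lt X Y : 0 <= X -> 0 <= Y -> X * X < Y * Y -> X < Y.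
Proof. intros. destruct (Rlt_or_le X Y); auto. nra. Qed.

Lemma ineq1_aux h : 0 < h -> h <> 1 -> gg h < (h - 1) ^ 2 * exp (- (2/3) * ln h).
Proof.
  intros Hh Hn.
  set (E := fun x => exp (- (2/3) * ln x)).
  assert (KE : forall x, 0 < x -> x <> 1 -> 3 < E x * (2 * x + 1)).
  { intros x Hx Hx1. destruct (Rlt_or_le 3 (E x * (2 * x + 1))) as [|Hc]; auto. exfalso.
    assert (E3 : E x ^ 3 * x ^ 2 = 1).
    { unfold E. rewrite exp3. replace (3 * (- (2/3) * ln x)) with (- (2 * ln x)) by field.
      rewrite exp_Ropp. replace (2 * ln x) with (ln x + ln x) by ring. rewrite exp_plus, exp_ln by lra. field. lra. }
    assert (EP : 0 < E x) by (unfold E; apply exp_pos).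
    assert (C : (E x * (2 * x + 1)) ^ 3 <= 3 ^ 3).
    { apply pow_incr. split; [nra|lra]. }
    assert (Pd : 0 < (x - 1) ^ 2 * (8 * x + 1)).
    { apply Rmult_lt_0_compat; [|lra]. apply sqr_pos; lra. }
    assert ((2*x+1)^3 - 27 * x^2 = (x - 1) ^ 2 * (8 * x + 1)) by ring.
    assert ((E x * (2 * x + 1)) ^ 3 * x^2 = (2*x+1)^3) by (replace ((E x * (2 * x + 1)) ^ 3 * x^2) with ((E x ^3 * x^2) * (2*x+1)^3) by ring; rewrite E3; ring).
    assert (0 < x^2) by (apply pow_lt; lra).
    assert ((E x*(2*x+1))^3 * x^2 <= 3^3 * x^2) by (apply Rmult_le_compat_r; lra). lra. }
  set (F := fun x => (x - 1) ^ 2 * E x - gg x).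
  set (dF := fun x => (x - 1) / x * (E x * (4 * x + 2) / 3 - 2)).
  assert (0 < F h); [|unfold F, E in *; lra].
  apply (cmp_both F dF); auto.
  - intros x Hx. apply is_derive_Reals. unfold F, E, gg, dF. auto_derive; [lra|].
    unfold E. field. lra.
  - intros x Hx. unfold dF. assert (3 < E x * (2 * x + 1)) by (apply KE; lra).
    assert ((x - 1) / x < 0). { unfold Rdiv. apply Rmult_neg_pos; [lra| apply Rinv_0_lt_compat; lra]. }
    nra.
  - intros x Hx. unfold dF. assert (3 < E x * (2 * x + 1)) by (apply KE; lra).
    assert (0 < (x - 1) / x). { unfold Rdiv. apply Rmult_lt_0_compat; [lra| apply Rinv_0_lt_compat; lra]. }
    nra.
  - unfold F, gg. rewrite ln_1. ring.
Qed.

Lemma pow_lt_mono a b n : 0 <= a -> a < b -> (0 < n)%nat -> a ^ n < b ^ n.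
Proof.
  intros Ha Hab Hn. induction n as [|n IH]; [lia|].
  destruct n as [|n]; [simpl; lra|].
  assert (a ^ S n < b ^ S n) by (apply IH; lia).
  change (a * a ^ S n < b * b ^ S n).
  apply Rmult_le_0_lt_compat; auto. apply pow_le; auto.
Qed.

Lemma cube_lt a b : 0 < a -> a < b -> a ^ 3 < b ^ 3.
Proof. intros. apply pow_lt_mono; [lra|lra|lia]. Qed.

Lemma ineq1 h : 0 < h -> h <> 1 -> gg h * sqrt (gg h) * h < Rabs (h - 1) ^ 3.
Proof.
  intros Hh Hn.
  assert (Hg : 0 < gg h) by (apply gg_pos; auto).
  pose proof (ineq1_aux h Hh Hn) as HA.
  set (E := exp (- (2 / 3) * ln h)) in *.
  assert (E3 : E ^ 3 * h ^ 2 = 1).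
  { unfold E. rewrite exp3. replace (3 * (- (2/3) * ln h)) with (- (2 * ln h)) by field.
    rewrite exp_Ropp. replace (2 * ln h) with (ln h + ln h) by ring. rewrite exp_plus, exp_ln by lra. field. lra. }
  assert (C : gg h ^ 3 < ((h - 1) ^ 2 * E) ^ 3) by (apply cube_lt; auto).
  assert (C2 : gg h ^ 3 * h ^ 2 < (h - 1) ^ 6).
  { replace ((h-1)^6) with (((h - 1) ^ 2 * E) ^ 3 * h^2) by (replace (((h - 1) ^ 2 * E) ^ 3 * h^2) with ((h-1)^6 * (E^3 * h^2)) by ring; rewrite E3; ring).
    apply Rmult_lt_compat_r; auto. apply pow_lt; lra. }
  assert (Sq := sqrt_sqrt (gg h) ltac:(lra)).
  assert (Sp := sqrt_lt_R0 (gg h) Hg).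
  apply sq_lt.
  - apply Rmult_le_pos; [|lra]. apply Rmult_le_pos; lra.
  - apply pow_le, Rabs_pos.
  - replace (Rabs (h - 1) ^ 3 * Rabs (h - 1) ^ 3) with ((h-1)^6).
    2:{ replace (Rabs (h-1)^3 * Rabs(h-1)^3) with ((Rabs (h-1)^2)^3) by ring; rewrite pow2_abs; ring. }
    replace (gg h * sqrt (gg h) * h * (gg h * sqrt (gg h) * h)) with (gg h ^ 2 * (sqrt (gg h) * sqrt (gg h)) * h^2) by ring.
    rewrite Sq. replace (gg h ^2 * gg h * h^2) with (gg h ^ 3 * h ^ 2) by ring. exact C2.
Qed.

Lemma polyP_pos x : 0 < x -> 0 < 9 + 378*x + 3652*x^2 + 17896*x^3 + 60880*x^4 + 154496*x^5 + 245552*x^6 + 206528*x^7 + 69984*x^8.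
Proof.
  intro Hx. assert (forall n, 0 < x ^ n) by (intro; apply pow_lt; auto).
  pose proof (H 1%nat); pose proof (H 2%nat); pose proof (H 3%nat); pose proof (H 4%nat);
  pose proof (H 5%nat); pose proof (H 6%nat); pose proof (H 7%nat); pose proof (H 8%nat).
  simpl pow in *. lra.
Qed.

Lemma ineq2_aux h : 0 < h -> h <> 1 ->
  gg h < (h - 1) ^ 2 * exp (2/5 * (ln 3 - ln (h * (2 * h + 1)))).
Proof.
  intros Hh Hn.
  set (E := fun x => exp (2/5 * (ln 3 - ln (x * (2 * x + 1))))).
  assert (E5 : forall x, 0 < x -> E x ^ 5 * (x * (2 * x + 1)) ^ 2 = 9).
  { intros x Hx. unfold E. rewrite exp5.
    replace (5 * (2 / 5 * (ln 3 - ln (x * (2 * x + 1))))) with ((ln 3 - ln (x * (2 * x + 1))) + (ln 3 - ln (x * (2 * x + 1)))) by field.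
    rewrite exp_plus. rewrite <- ln_div by nra. rewrite exp_ln.
    2:{ apply Rdiv_lt_0_compat; nra. }
    field. nra. }
  assert (KE : forall x, 0 < x -> x <> 1 -> 5 * (2 * x + 1) < E x * (6 * x^2 + 8 * x + 1)).
  { intros x Hx Hx1. destruct (Rlt_or_le (5 * (2 * x + 1)) (E x * (6 * x^2 + 8 * x + 1))) as [|Hc]; auto. exfalso.
    assert (EP : 0 < E x) by (unfold E; apply exp_pos).
    assert (C : (E x * (6 * x^2 + 8 * x + 1)) ^ 5 <= (5 * (2 * x + 1)) ^ 5).
    { apply pow_incr. split; [|lra]. apply Rmult_le_pos; [lra|]. assert (0 < x^2) by (apply pow_lt; lra). lra. }
    assert (Q : 0 < (x * (2 * x + 1)) ^ 2) by (apply pow_lt; nra).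
    assert (C2 : (E x * (6 * x^2 + 8 * x + 1)) ^ 5 * (x * (2 * x + 1)) ^ 2 <= (5 * (2 * x + 1)) ^ 5 * (x * (2 * x + 1)) ^ 2)
      by (apply Rmult_le_compat_r; lra).
    replace ((E x * (6 * x^2 + 8 * x + 1)) ^ 5 * (x * (2 * x + 1)) ^ 2) with
      ((E x ^ 5 * (x * (2 * x + 1)) ^ 2) * (6 * x^2 + 8 * x + 1) ^ 5) in C2 by ring.
    rewrite E5 in C2 by auto.
    assert (Pd : 0 < (x - 1) ^ 2 * (9 + 378*x + 3652*x^2 + 17896*x^3 + 60880*x^4 + 154496*x^5 + 245552*x^6 + 206528*x^7 + 69984*x^8)).
    { apply Rmult_lt_0_compat; [apply sqr_pos; lra| apply polyP_pos; auto]. }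
    assert (9 * (6 * x^2 + 8 * x + 1) ^ 5 - (5 * (2 * x + 1)) ^ 5 * (x * (2 * x + 1)) ^ 2 = (x - 1) ^ 2 * (9 + 378*x + 3652*x^2 + 17896*x^3 + 60880*x^4 + 154496*x^5 + 245552*x^6 + 206528*x^7 + 69984*x^8)) by ring.
    lra. }
  set (F := fun x => (x - 1) ^ 2 * E x - gg x).
  set (dF := fun x => (x - 1) / x * (E x * (12 * x^2 + 16 * x + 2) / (5 * (2 * x + 1)) - 2)).
  assert (0 < F h); [|unfold F, E in *; lra].
  apply (cmp_both F dF); auto.
  - intros x Hx. apply is_derive_Reals. unfold F, E, gg, dF. auto_derive; [repeat split; nra|].
    unfold E, Rminus. field. lra.
  - intros x Hx. unfold dF. assert (5 * (2 * x + 1) < E x * (6 * x^2 + 8 * x + 1)) by (apply KE; lra).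
    assert ((x - 1) / x < 0). { unfold Rdiv. apply Rmult_neg_pos; [lra| apply Rinv_0_lt_compat; lra]. }
    assert (2 < E x * (12 * x ^ 2 + 16 * x + 2) / (5 * (2 * x + 1))).
    { apply Rmult_lt_reg_r with (5 * (2 * x + 1)); [lra|]. unfold Rdiv. rewrite Rmult_assoc, Rinv_l by lra. lra. }
    nra.
  - intros x Hx. unfold dF. assert (5 * (2 * x + 1) < E x * (6 * x^2 + 8 * x + 1)) by (apply KE; lra).
    assert (0 < (x - 1) / x). { unfold Rdiv. apply Rmult_lt_0_compat; [lra| apply Rinv_0_lt_compat; lra]. }
    assert (2 < E x * (12 * x ^ 2 + 16 * x + 2) / (5 * (2 * x + 1))).
    { apply Rmult_lt_reg_r with (5 * (2 * x + 1)); [lra|]. unfold Rdiv. rewrite Rmult_assoc, Rinv_l by lra. lra. }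
    nra.
  - unfold F, gg. rewrite ln_1. ring.
Qed.

Lemma ineq2 h : 0 < h -> h <> 1 ->
  gg h ^ 2 * sqrt (gg h) * (h * (2 * h + 1)) < 3 * Rabs (h - 1) ^ 5.
Proof.
  intros Hh Hn.
  assert (Hg : 0 < gg h) by (apply gg_pos; auto).
  pose proof (ineq2_aux h Hh Hn) as HA.
  set (q := h * (2 * h + 1)) in *.
  assert (Hq : 0 < q) by (unfold q; nra).
  set (E := exp (2 / 5 * (ln 3 - ln q))) in *.
  assert (E5 : E ^ 5 * q ^ 2 = 9).
  { unfold E. rewrite exp5.
    replace (5 * (2 / 5 * (ln 3 - ln q))) with ((ln 3 - ln q) + (ln 3 - ln q)) by field.
    rewrite exp_plus. rewrite <- ln_div by lra. rewrite exp_ln.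
    2:{ apply Rdiv_lt_0_compat; lra. }
    field. lra. }
  assert (C : gg h ^ 5 < ((h - 1) ^ 2 * E) ^ 5) by (apply pow_lt_mono; [lra|auto|lia]).
  assert (C2 : gg h ^ 5 * q ^ 2 < 9 * (h - 1) ^ 10).
  { replace (9 * (h-1)^10) with (((h - 1) ^ 2 * E) ^ 5 * q^2) by (replace (((h - 1) ^ 2 * E) ^ 5 * q^2) with ((h-1)^10 * (E^5 * q^2)) by ring; rewrite E5; ring).
    apply Rmult_lt_compat_r; auto. apply pow_lt; lra. }
  assert (Sq := sqrt_sqrt (gg h) ltac:(lra)).
  assert (Sp := sqrt_lt_R0 (gg h) Hg).
  apply sq_lt.
  - apply Rmult_le_pos; [|lra]. apply Rmult_le_pos; [apply pow_le|]; lra.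
  - apply Rmult_le_pos; [lra|]. apply pow_le, Rabs_pos.
  - replace (3 * Rabs (h - 1) ^ 5 * (3 * Rabs (h - 1) ^ 5)) with (9 * (h-1)^10).
    2:{ replace (3 * Rabs (h - 1) ^ 5 * (3 * Rabs (h - 1) ^ 5)) with (9 * (Rabs (h-1)^2)^5) by ring; rewrite pow2_abs; ring. }
    replace (gg h ^ 2 * sqrt (gg h) * q * (gg h ^ 2 * sqrt (gg h) * q)) with (gg h ^ 4 * (sqrt (gg h) * sqrt (gg h)) * q^2) by ring.
    rewrite Sq. replace (gg h ^ 4 * gg h * q ^ 2) with (gg h ^ 5 * q ^ 2) by ring. exact C2.
Qed.

Lemma dpl_comp (F G : R -> R) x dF dG l :
  derivable_pt_lim G x dG -> derivable_pt_lim F (G x) dF -> l = dF * dG ->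
  derivable_pt_lim (fun y => F (G y)) x l.
Proof. intros. subst. apply (derivable_pt_lim_comp G F); auto. Qed.

Lemma dpl_plus (F G : R -> R) x a b l :
  derivable_pt_lim F x a -> derivable_pt_lim G x b -> l = a + b ->
  derivable_pt_lim (fun y => F y + G y) x l.
Proof. intros. subst. apply (derivable_pt_lim_plus F G); auto. Qed.

Lemma loc_gt1 f : 1 < f -> locally f (fun t => 1 < t).
Proof. intro. apply (locally_open (fun t => 1 < t)); auto. apply open_gt. Qed.

Definition Kprop (K : R -> R) := forall f, 1 < f ->
  0 < K f /\ K f <> 1 /\ phi (K f) = f /\ is_derive K f (K f / (K f - 1)).

Lemma Kprop_hup : Kprop hup.
Proof.
  intros f Hf. destruct (hup_spec f Hf). split; [lra|split; [lra|split; [auto|apply hup_deriv; auto]]].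
Qed.

Lemma Kprop_hlo : Kprop hlo.
Proof.
  intros f Hf. destruct (hlo_spec f Hf). split; [lra|split; [lra|split; [auto|apply hlo_deriv; auto]]].
Qed.

Definition jj (s : R) (K : R -> R) (f : R) := s / (K f - 1) - / sqrt (2 * (f - 1)).
Definition dd1 (s : R) (K : R -> R) (f : R) :=
  - s * K f / (K f - 1) ^ 3 + / (2 * (f - 1) * sqrt (2 * (f - 1))).
Definition dd2 (s : R) (K : R -> R) (f : R) :=
  s * K f * (2 * K f + 1) / (K f - 1) ^ 5 - 3 / ((2 * (f - 1)) ^ 2 * sqrt (2 * (f - 1))).

Lemma sqrt_part1 f : 1 < f ->
  derivable_pt_lim (fun t => - / sqrt (2 * (t - 1))) f (/ (2 * (f - 1) * sqrt (2 * (f - 1)))).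
Proof.
  intro Hf. apply is_derive_Reals. auto_derive.
  - repeat split; try lra. apply Rgt_not_eq, sqrt_lt_R0; lra.
  - assert (S := sqrt_sqrt (2 * (f - 1)) ltac:(lra)).
    assert (Sp := sqrt_lt_R0 (2 * (f - 1)) ltac:(lra)).
    unfold Rminus in *. rewrite S. field. lra.
Qed.

Lemma sqrt_part2 f : 1 < f ->
  derivable_pt_lim (fun t => / (2 * (t - 1) * sqrt (2 * (t - 1)))) f (- (3 / ((2 * (f - 1)) ^ 2 * sqrt (2 * (f - 1))))).
Proof.
  intro Hf. apply is_derive_Reals.
  assert (S := sqrt_sqrt (2 * (f - 1)) ltac:(lra)).
  assert (Sp := sqrt_lt_R0 (2 * (f - 1)) ltac:(lra)).
  unfold Rminus in *.
  auto_derive.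
  - split; [lra|split; [apply Rgt_not_eq, Rmult_lt_0_compat; lra|exact I]].
  - set (r := sqrt (2 * (f + - (1)))) in *. rewrite <- S. field. lra.
Qed.

Lemma jj_deriv s K f : Kprop K -> 1 < f -> is_derive (jj s K) f (dd1 s K f).
Proof.
  intros HK Hf. destruct (HK f Hf) as [Kp [Kn [Kphi Kd]]].
  apply is_derive_Reals. unfold jj.
  eapply derivable_pt_lim_ext. { intro z. unfold Rminus at 2. reflexivity. }
  apply dpl_plus with (a := - s * K f / (K f - 1) ^ 3) (b := / (2 * (f - 1) * sqrt (2 * (f - 1)))).
  - apply dpl_comp with (F := fun k => s / (k - 1)) (dG := K f / (K f - 1)) (dF := - s / (K f - 1) ^ 2).
    + apply is_derive_Reals; auto.
    + apply is_derive_Reals. auto_derive. lra. field. lra.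
    + field. lra.
  - apply sqrt_part1; auto.
  - unfold dd1. ring.
Qed.

Lemma d1_deriv s K f : Kprop K -> 1 < f -> is_derive (dd1 s K) f (dd2 s K f).
Proof.
  intros HK Hf. destruct (HK f Hf) as [Kp [Kn [Kphi Kd]]].
  apply is_derive_Reals. unfold dd1.
  apply dpl_plus with (a := s * K f * (2 * K f + 1) / (K f - 1) ^ 5) (b := - (3 / ((2 * (f - 1)) ^ 2 * sqrt (2 * (f - 1))))).
  - apply dpl_comp with (F := fun k => - s * k / (k - 1) ^ 3) (dG := K f / (K f - 1))
       (dF := s * (2 * K f + 1) / (K f - 1) ^ 4).
    + apply is_derive_Reals; auto.
    + apply is_derive_Reals. auto_derive. { assert (K f + - (1) <> 0) by lra. repeat apply Rmult_integral_contrapositive_currified; auto; lra. } field. lra.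
    + field. lra.
  - apply sqrt_part2; auto.
  - unfold dd2. ring.
Qed.

Lemma jup_eq : jup = jj 1 hup.
Proof. apply functional_extensionality; intro x. unfold jup, jj. unfold Rdiv. ring. Qed.

Lemma jlo_eq : jlo = jj (-1) hlo.
Proof.
  apply functional_extensionality; intro x. unfold jlo, jj.
  replace (1 - hlo x) with (- (hlo x - 1)) by ring. rewrite Rinv_opp. unfold Rdiv. ring.
Qed.

Lemma Derive_jj s K f : Kprop K -> 1 < f -> Derive (jj s K) f = dd1 s K f.
Proof. intros. apply is_derive_unique. apply jj_deriv; auto. Qed.

Lemma Derive2_jj s K f : Kprop K -> 1 < f -> is_derive (Derive (jj s K)) f (dd2 s K f).
Proof.
  intros HK Hf. apply is_derive_ext_loc with (dd1 s K).
  - apply filter_imp with (fun t => 1 < t); [|apply loc_gt1; auto].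
    intros t Ht. symmetry. apply Derive_jj; auto.
  - apply d1_deriv; auto.
Qed.

Lemma gg_phi h : gg h = 2 * (phi h - 1).
Proof. unfold gg, phi. ring. Qed.

Lemma signs s K f t : Kprop K -> 1 < f -> s * s = 1 -> 0 < t -> K f - 1 = s * t ->
  0 < dd1 s K f /\ dd2 s K f < 0.
Proof.
  intros HK Hf Hs Ht Et. destruct (HK f Hf) as [Kp [Kn [Kphi Kd]]].
  set (H := K f) in *.
  assert (Hg : gg H = 2 * (f - 1)) by (rewrite gg_phi, Kphi; ring).
  assert (Ab : Rabs (H - 1) = t).
  { rewrite Et, Rabs_mult. assert (Rabs s = 1).
    { destruct (Rle_or_lt 0 s). rewrite Rabs_pos_eq by lra. nra. rewrite Rabs_left by lra. nra. }
    rewrite H0, Rabs_pos_eq; lra. }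
  pose proof (ineq1 H Kp Kn) as I1. pose proof (ineq2 H Kp Kn) as I2.
  rewrite Hg, Ab in *.
  set (g := 2 * (f - 1)) in *.
  assert (gp : 0 < g) by (unfold g; lra).
  assert (S := sqrt_lt_R0 g gp).
  set (r := sqrt g) in *.
  unfold dd1, dd2. fold H. fold g. fold r.
  rewrite Et.
  assert (s3 : (s * t) ^ 3 = s * t ^ 3).
  { replace ((s*t)^3) with ((s*s)*s*t^3) by ring. rewrite Hs. ring. }
  assert (s5 : (s * t) ^ 5 = s * t ^ 5).
  { replace ((s*t)^5) with ((s*s)*(s*s)*s*t^5) by ring. rewrite Hs. ring. }
  assert (sn : s <> 0) by (intro Z; rewrite Z in Hs; lra).
  rewrite s3, s5.
  clearbody H g r.
  assert (t3 : 0 < t ^ 3) by (apply pow_lt; auto).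
  assert (t5 : 0 < t ^ 5) by (apply pow_lt; auto).
  split.
  - replace (- s * H / (s * t ^ 3) + / (g * r)) with ((t ^ 3 - g * r * H) / (t ^ 3 * (g * r))).
    2:{ field. repeat split; lra. }
    apply Rdiv_lt_0_compat; [lra|]. apply Rmult_lt_0_compat; [lra| apply Rmult_lt_0_compat; lra].
  - replace (s * H * (2 * H + 1) / (s * t ^ 5) - 3 / (g ^ 2 * r)) with
      ((g ^ 2 * r * (H * (2 * H + 1)) - 3 * t ^ 5) / (t ^ 5 * (g ^ 2 * r))).
    2:{ field. repeat split; lra. }
    unfold Rdiv. apply Rmult_neg_pos; [lra|]. apply Rinv_0_lt_compat.
    apply Rmult_lt_0_compat; [lra| apply Rmult_lt_0_compat; [apply pow_lt|]; lra].
Qed.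

Ltac dsolve := apply is_derive_Reals; auto_derive; [try lra | field; lra].

Lemma L1 h : 1 < h -> ln h < (h-1) - (h-1)^2/2 + (h-1)^3/3.
Proof.
  intro Hh.
  set (F := fun x => (x-1) - (x-1)^2/2 + (x-1)^3/3 - ln x).
  assert (0 < F h); [|unfold F in *; lra].
  apply (cmp_right F (fun x => (x-1)^3 / x) (h+1)); try lra.
  - intros x Hx. unfold F. dsolve.
  - intros x Hx. apply Rdiv_lt_0_compat; [apply pow_lt|]; lra.
  - unfold F; cbv beta. rewrite ln_1. field.
Qed.

Lemma L2 h : 1 < h -> (h-1) - (h-1)^2/2 + (h-1)^3/3 - (h-1)^4/4 < ln h.
Proof.
  intro Hh.
  set (F := fun x => ln x - ((x-1) - (x-1)^2/2 + (x-1)^3/3 - (x-1)^4/4)).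
  assert (0 < F h); [|unfold F in *; lra].
  apply (cmp_right F (fun x => (x-1)^4 / x) (h+1)); try lra.
  - intros x Hx. unfold F. dsolve.
  - intros x Hx. apply Rdiv_lt_0_compat; [apply pow_lt|]; lra.
  - unfold F; cbv beta. rewrite ln_1. field.
Qed.

Lemma L3 h : 0 < h < 1 -> (1-h) + (1-h)^2/2 + (1-h)^3/3 < - ln h.
Proof.
  intro Hh.
  set (F := fun x => - ln x - ((1-x) + (1-x)^2/2 + (1-x)^3/3)).
  assert (0 < F h); [|unfold F in *; lra].
  apply (cmp_left F (fun x => - (1-x)^3 / x) 0); try lra.
  - intros x Hx. unfold F. dsolve.
  - intros x Hx. unfold Rdiv. apply Rmult_neg_pos.
    + assert (0 < (1-x)^3) by (apply pow_lt; lra). lra.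
    + apply Rinv_0_lt_compat; lra.
  - unfold F; cbv beta. rewrite ln_1. field.
Qed.

Lemma L4 h : 1/2 < h < 1 -> - ln h < (1-h) + (1-h)^2/2 + (1-h)^3/3 + (1-h)^4/2.
Proof.
  intro Hh.
  set (F := fun x => (1-x) + (1-x)^2/2 + (1-x)^3/3 + (1-x)^4/2 + ln x).
  assert (0 < F h); [|unfold F in *; lra].
  apply (cmp_left F (fun x => (1-x)^3 * (1 - 2 * x) / x) (1/2)); try lra.
  - intros x Hx. unfold F. dsolve.
  - intros x Hx. unfold Rdiv. apply Rmult_neg_pos.
    + assert (0 < (1-x)^3) by (apply pow_lt; lra). nra.
    + apply Rinv_0_lt_compat; lra.
  - unfold F; cbv beta. rewrite ln_1. field.
Qed.

Lemma L5 h : 1 < h -> (h-1) - (h-1)^2/2 < ln h.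
Proof.
  intro Hh.
  set (F := fun x => ln x - ((x-1) - (x-1)^2/2)).
  assert (0 < F h); [|unfold F in *; lra].
  apply (cmp_right F (fun x => (x-1)^2 / x) (h+1)); try lra.
  - intros x Hx. unfold F. dsolve.
  - intros x Hx. apply Rdiv_lt_0_compat; [apply pow_lt|]; lra.
  - unfold F; cbv beta. rewrite ln_1. field.
Qed.

Lemma L6 h : 0 < h < 1 -> - ln h < (/ h - h) / 2.
Proof.
  intro Hh.
  set (F := fun x => (/ x - x) / 2 + ln x).
  assert (0 < F h); [|unfold F in *; lra].
  apply (cmp_left F (fun x => - (1-x)^2 / (2 * x^2)) 0); try lra.
  - intros x Hx. unfold F. dsolve.
  - intros x Hx. unfold Rdiv. apply Rmult_neg_pos.
    + assert (0 < (1-x)^2) by (apply pow_lt; lra). lra.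
    + apply Rinv_0_lt_compat. assert (0 < x^2) by (apply pow_lt; lra). lra.
  - unfold F; cbv beta. rewrite ln_1. field.
Qed.

Lemma ball_R (x y e : R) : ball x e y -> Rabs (y - x) < e.
Proof. intro H. exact H. Qed.

Lemma ball_R' (x y e : R) : Rabs (y - x) < e -> ball x e y.
Proof. intro H. exact H. Qed.

Lemma at_right_of x d (P : R -> Prop) : 0 < d -> (forall y, x < y < x + d -> P y) -> at_right x P.
Proof.
  intros Hd H. exists (mkposreal d Hd). intros y Hb Hxy. apply ball_R in Hb. simpl in Hb.
  apply H. split; auto. apply Rabs_lt_between' in Hb. lra.
Qed.

Lemma at_left_of x d (P : R -> Prop) : 0 < d -> (forall y, x - d < y < x -> P y) -> at_left x P.
Proof.
  intros Hd H. exists (mkposreal d Hd). intros y Hb Hxy. apply ball_R in Hb. simpl in Hb.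
  apply H. split; auto. apply Rabs_lt_between' in Hb. lra.
Qed.

Lemma hup_lim : filterlim hup (at_right 1) (at_right 1).
Proof.
  intros P [eps HP].
  assert (Hd : phi 1 < phi (1 + eps / 2)) by (apply phi_incr; destruct eps; simpl; lra). rewrite phi_1 in Hd.
  apply (at_right_of 1 (phi (1 + eps/2) - 1)); [lra|].
  intros f Hf. destruct (hup_spec f ltac:(lra)) as [H1 H2].
  assert (hup f < 1 + eps / 2).
  { destruct (Rlt_or_le (hup f) (1 + eps/2)) as [|Hc]; auto.
    destruct (Rle_lt_or_eq_dec _ _ Hc) as [Hc'|Hc'].
    - apply phi_incr in Hc'; [lra|destruct eps; simpl; lra].
    - rewrite <- Hc' in H2. lra. }
  apply HP; [|lra]. apply ball_R'. destruct eps; simpl in *. rewrite Rabs_pos_eq; lra.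
Qed.

Lemma hlo_lim : filterlim hlo (at_right 1) (at_left 1).
Proof.
  intros P [eps HP].
  set (e := Rmin (eps / 2) (1/2)).
  assert (He : 0 < e < 1) by (unfold e, Rmin; destruct eps as [ep Hep]; simpl; destruct (Rle_dec (ep / 2) (1/2)); lra).
  assert (Hee : e <= eps / 2) by (unfold e; apply Rmin_l).
  clearbody e.
  assert (Hd : phi 1 < phi (1 - e)) by (apply phi_decr; lra). rewrite phi_1 in Hd.
  apply (at_right_of 1 (phi (1 - e) - 1)); [lra|].
  intros f Hf. destruct (hlo_spec f ltac:(lra)) as [H1 H2].
  assert (1 - e < hlo f).
  { destruct (Rlt_or_le (1 - e) (hlo f)) as [|Hc]; auto.
    destruct (Rle_lt_or_eq_dec _ _ Hc) as [Hc'|Hc'].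
    - apply phi_decr in Hc'; lra.
    - rewrite Hc' in H2. lra. }
  apply HP; [|lra]. apply ball_R'. destruct eps; simpl in *. rewrite Rabs_left; lra.
Qed.

Definition Gc (c u : R) := c / (sqrt (1 + u * c) * (sqrt (1 + u * c) + 1)).

Lemma Gc_id c u : 0 < u -> 0 < 1 + u * c -> / u - / sqrt (u ^ 2 * (1 + u * c)) = Gc c u.
Proof.
  intros Hu Hc. unfold Gc.
  rewrite sqrt_mult_alt by (apply pow_le; lra).
  replace (u^2) with (u * u) by ring. rewrite sqrt_square by lra.
  assert (S := sqrt_sqrt (1 + u * c) ltac:(lra)).
  assert (Sp := sqrt_lt_R0 (1 + u * c) Hc).
  set (q := sqrt (1 + u * c)) in *.
  clearbody q.
  replace c with ((q * q - 1) / u) by (rewrite S; field; lra).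
  field. repeat split; lra.
Qed.

Lemma inv_sqrt_le a b : 0 < a -> a <= b -> / sqrt b <= / sqrt a.
Proof.
  intros Ha Hab. apply Rinv_le_contravar. apply sqrt_lt_R0; auto. apply sqrt_le_1_alt; auto.
Qed.

Definition Eup h := / (h - 1) - / sqrt (gg h).
Definition Elo h := / (1 - h) - / sqrt (gg h).

Lemma Eup_bounds h : 1 < h < 3/2 ->
  Gc (-2/3) (h - 1) <= Eup h <= Gc (-2/3 + (h-1)/2) (h - 1).
Proof.
  intro Hh. pose proof (L1 h ltac:(lra)). pose proof (L2 h ltac:(lra)).
  assert (Hu : 0 < (h - 1)) by lra.
  assert (G1 : (h - 1) ^ 2 * (1 + (h - 1) * (-2/3)) < gg h) by (unfold gg; lra).
  assert (G2 : gg h < (h - 1) ^ 2 * (1 + (h - 1) * (-2/3 + (h - 1)/2))) by (unfold gg; lra).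
  assert (P1 : 0 < 1 + (h - 1) * (-2/3)) by lra.
  assert (P2 : 0 < 1 + (h - 1) * (-2/3 + (h - 1)/2)) by nra.
  assert (0 < (h - 1) ^ 2) by (apply pow_lt; lra).
  unfold Eup. rewrite <- !Gc_id by auto. split.
  - apply Rplus_le_compat_l, Ropp_le_contravar. apply inv_sqrt_le; [nra|lra].
  - apply Rplus_le_compat_l, Ropp_le_contravar. apply inv_sqrt_le; [nra|lra].
Qed.

Lemma Elo_bounds h : 1/2 < h < 1 ->
  Gc (2/3) (1 - h) <= Elo h <= Gc (2/3 + (1 - h)) (1 - h).
Proof.
  intro Hh. pose proof (L3 h ltac:(lra)). pose proof (L4 h ltac:(lra)).
  assert (Hu : 0 < (1 - h)) by lra.
  assert (G1 : (1 - h) ^ 2 * (1 + (1 - h) * (2/3)) < gg h) by (unfold gg; lra).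
  assert (G2 : gg h < (1 - h) ^ 2 * (1 + (1 - h) * (2/3 + (1 - h)))) by (unfold gg; lra).
  assert (P1 : 0 < 1 + (1 - h) * (2/3)) by lra.
  assert (P2 : 0 < 1 + (1 - h) * (2/3 + (1 - h))) by nra.
  assert (0 < (1 - h) ^ 2) by (apply pow_lt; lra).
  unfold Elo. rewrite <- !Gc_id by auto. split.
  - apply Rplus_le_compat_l, Ropp_le_contravar. apply inv_sqrt_le; [nra|lra].
  - apply Rplus_le_compat_l, Ropp_le_contravar. apply inv_sqrt_le; [nra|lra].
Qed.

Lemma lim_cont (F : R -> R) x l (Fl : (R -> Prop) -> Prop) {FF : Filter Fl} :
  ex_derive F x -> F x = l -> filter_le Fl (locally x) -> filterlim F Fl (locally l).
Proof.
  intros Hd Hx Hle. apply (filterlim_filter_le_1 (F := locally x)); auto.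
  rewrite <- Hx. exact (ex_derive_continuous F x Hd).
Qed.

Lemma Gc0 c : Gc c 0 = c / 2.
Proof. unfold Gc. replace (1 + 0 * c) with 1 by ring. rewrite sqrt_1. field. Qed.

Lemma gg_phi' h : gg h = 2 * (phi h - 1).
Proof. unfold gg, phi. ring. Qed.

Lemma Eup_lim : filterlim Eup (at_right 1) (locally (-(1/3))).
Proof.
  change (filterlim Eup (at_right 1) (Rbar_locally (-(1/3)))).
  apply (@filterlim_le_le R (at_right 1) _ (fun h => Gc (-2/3) (h - 1)) Eup (fun h => Gc (-2/3 + (h-1)/2) (h - 1))).
  - apply (at_right_of 1 (1/2)); [lra|]. intros y Hy. apply Eup_bounds. lra.
  - apply (lim_cont _ 1). { apply within_filter, locally_filter. }
    + unfold Gc; cbv beta. auto_derive. replace (1 + - (1)) with 0 by ring. rewrite !Rmult_0_l, Rplus_0_r, sqrt_1.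
      repeat split; try lra.
    + rewrite Rminus_eq_0, Gc0. field.
    + apply filter_le_within.
  - apply (lim_cont _ 1). { apply within_filter, locally_filter. }
    + unfold Gc; cbv beta. auto_derive. replace (1 + - (1)) with 0 by ring. rewrite !Rmult_0_l, Rplus_0_r, sqrt_1.
      repeat split; try lra.
    + rewrite Rminus_eq_0, Gc0. field.
    + apply filter_le_within.
Qed.

Lemma Elo_lim : filterlim Elo (at_left 1) (locally (1/3)).
Proof.
  change (filterlim Elo (at_left 1) (Rbar_locally (1/3))).
  apply (@filterlim_le_le R (at_left 1) _ (fun h => Gc (2/3) (1 - h)) Elo (fun h => Gc (2/3 + (1 - h)) (1 - h))).
  - apply (at_left_of 1 (1/2)); [lra|]. intros y Hy. apply Elo_bounds. lra.
  - apply (lim_cont _ 1). { apply within_filter, locally_filter. }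
    + unfold Gc; cbv beta. auto_derive. replace (1 + - (1)) with 0 by ring. rewrite !Rmult_0_l, Rplus_0_r, sqrt_1.
      repeat split; try lra.
    + rewrite Rminus_eq_0, Gc0. field.
    + apply filter_le_within.
  - apply (lim_cont _ 1). { apply within_filter, locally_filter. }
    + unfold Gc; cbv beta. auto_derive. replace (1 + - (1)) with 0 by ring. rewrite !Rmult_0_l, Rplus_0_r, sqrt_1.
      repeat split; try lra.
    + rewrite Rminus_eq_0, Gc0. field.
    + apply filter_le_within.
Qed.

Lemma jup_lim : filterlim jup (at_right 1) (locally (-(1/3))).
Proof.
  apply filterlim_ext_loc with (fun f => Eup (hup f)).
  - apply (at_right_of 1 1); [lra|]. intros f Hf. destruct (hup_spec f ltac:(lra)) as [H1 H2].
    unfold Eup, jup. rewrite gg_phi', H2. reflexivity.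
  - apply filterlim_comp with (at_right 1). apply hup_lim. apply Eup_lim.
Qed.

Lemma jlo_lim : filterlim jlo (at_right 1) (locally (1/3)).
Proof.
  apply filterlim_ext_loc with (fun f => Elo (hlo f)).
  - apply (at_right_of 1 1); [lra|]. intros f Hf. destruct (hlo_spec f ltac:(lra)) as [H1 H2].
    unfold Elo, jlo. rewrite gg_phi', H2. reflexivity.
  - apply filterlim_comp with (at_left 1). apply hlo_lim. apply Elo_lim.
Qed.

Lemma polyA u : 0 < u <= 1/4 -> 1 <= (1+u+2*u*u)*(1-u/3-u*u/3)*(1-2*u/3).
Proof.
  intros. assert (E : (1+u+2*u*u)*(1-u/3-u*u/3)*(1-2*u/3) - 1 = u^2 * (8/9 - 17*u/9 + 4*u^3/9)) by field.
  assert (0 < u^2) by (apply pow_lt; lra). assert (0 <= u^3) by (apply pow_le; lra).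
  assert (0 <= u^2 * (8/9 - 17*u/9 + 4*u^3/9)) by (apply Rmult_le_pos; lra). lra.
Qed.

Lemma polyB u : 0 < u <= 1/4 -> 1 <= (1-u+2*u*u)*(1+u/3-u*u/9)*(1+2*u/3).
Proof.
  intros. assert (E : (1-u+2*u*u)*(1+u/3-u*u/9)*(1+2*u/3) - 1 = u^2 * (10/9 + 49*u/27 + 8*u^2/27 - 4*u^3/27)) by field.
  assert (0 < u^2) by (apply pow_lt; lra). assert (0 <= u^3) by (apply pow_le; lra).
  assert (u^3 <= (1/4)^3) by (apply pow_incr; lra).
  assert (0 <= u^2 * (10/9 + 49*u/27 + 8*u^2/27 - 4*u^3/27)) by (apply Rmult_le_pos; lra). lra.
Qed.

Lemma polyC u : 0 < u <= 1/4 -> (1-u/3-u*u/3)*(1-u/3-u*u/3) <= 1 - 2*u/3.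
Proof.
  intros. assert (E : (1-u/3-u*u/3)*(1-u/3-u*u/3) - (1 - 2*u/3) = u^2 * (-5/9 + 2*u/9 + u^2/9)) by field.
  assert (0 < u^2) by (apply pow_lt; lra). assert (u^2 <= (1/4)^2) by (apply pow_incr; lra).
  assert (0 <= u^2 * (-(-5/9 + 2*u/9 + u^2/9))) by (apply Rmult_le_pos; lra). lra.
Qed.

Lemma polyD u : 0 < u <= 1/4 -> (1+u/3-u*u/9)*(1+u/3-u*u/9) <= 1 + 2*u/3.
Proof.
  intros. assert (E : (1+u/3-u*u/9)*(1+u/3-u*u/9) - (1 + 2*u/3) = u^2 * (-1/9 - 2*u/27 + u^2/81)) by field.
  assert (0 < u^2) by (apply pow_lt; lra). assert (u^2 <= (1/4)^2) by (apply pow_incr; lra).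
  assert (0 <= u^2 * (-(-1/9 - 2*u/27 + u^2/81))) by (apply Rmult_le_pos; lra). lra.
Qed.

Lemma sqrt_ge_of a b : 0 <= a -> a * a <= b -> a <= sqrt b.
Proof. intros. rewrite <- (sqrt_square a) by auto. apply sqrt_le_1_alt; auto. Qed.

Lemma sqrt_lt_of a b : 0 < a -> 0 <= b -> b < a * a -> sqrt b < a.
Proof. intros. rewrite <- (sqrt_square a) by lra. apply sqrt_lt_1_alt; lra. Qed.

Lemma inv_le_frac X Y K : 0 < X -> 0 < Y -> Y <= K * X -> / X <= K / Y.
Proof.
  intros. apply Rmult_le_reg_r with (X * Y); [nra|].
  replace (/ X * (X * Y)) with Y by (field; lra).
  replace (K / Y * (X * Y)) with (K * X) by (field; lra). lra.
Qed.

Lemma sqrt_fm1 f : 1 < f -> sqrt (f - 1) <= sqrt (2 * (f - 1)).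
Proof. intro. apply sqrt_le_1_alt. lra. Qed.

Lemma bound_up f : 1 < f < phi (5/4) -> dd1 1 hup f <= 2 / sqrt (f - 1).
Proof.
  intro Hf. destruct (hup_spec f ltac:(lra)) as [H1 H2].
  assert (H54 : hup f < 5/4).
  { destruct (Rlt_or_le (hup f) (5/4)) as [|Hc]; auto.
    destruct (Rle_lt_or_eq_dec _ _ Hc) as [Hc'|Hc'].
    - apply phi_incr in Hc'; lra.
    - rewrite <- Hc' in H2. lra. }
  pose proof (L1 (hup f) H1) as B1. pose proof (L5 (hup f) H1) as B5.
  assert (Hg : gg (hup f) = 2 * (f - 1)) by (rewrite gg_phi, H2; ring).
  unfold dd1.
  generalize (sqrt_fm1 f ltac:(lra)). intro Sf.
  assert (Sp1 : 0 < sqrt (f - 1)) by (apply sqrt_lt_R0; lra).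
  rewrite <- Hg in *. unfold gg in *.
  set (H := hup f) in *. clearbody H.
  set (u := H - 1). assert (Hu : 0 < u <= 1/4) by (unfold u; lra).
  replace H with (1 + u) in * by (unfold u; ring). clearbody u.
  replace (1 + u - 1) with u in * by ring.
  set (g := 2 * (u - ln (1 + u))) in *.
  assert (G1 : u ^ 2 * (1 - 2 * u / 3) <= g) by (unfold g; lra).
  assert (G2 : g < u ^ 2) by (unfold g; lra).
  clearbody g.
  assert (u2 : 0 < u ^ 2) by (apply pow_lt; lra).
  assert (gp : 0 < g) by nra.
  set (lb := 1 - u / 3 - u * u / 3).
  assert (lbp : 0 < lb) by (unfold lb; nra).
  assert (lb2 : lb * lb <= 1 - 2 * u / 3) by (apply polyC; auto).
  assert (Pa : 1 <= (1 + u + 2 * u * u) * lb * (1 - 2 * u / 3)) by (apply polyA; auto).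
  clearbody lb.
  assert (r1 : u * lb <= sqrt g) by (apply sqrt_ge_of; nra).
  assert (r2 : sqrt g < u) by (apply sqrt_lt_of; nra).
  assert (rp : 0 < sqrt g) by (apply sqrt_lt_R0; auto).
  set (r := sqrt g) in *. clearbody r.
  assert (u3 : 0 < u ^ 3) by (apply pow_lt; lra).
  assert (I : / (g * r) <= (1 + u + 2 * u * u) / u ^ 3).
  { apply inv_le_frac; [nra|auto|].
    assert (u ^ 3 <= (1 + u + 2 * u * u) * (u ^ 2 * (1 - 2 * u / 3)) * (u * lb)).
    { replace ((1 + u + 2 * u * u) * (u ^ 2 * (1 - 2 * u / 3)) * (u * lb)) with
        (u ^ 3 * ((1 + u + 2 * u * u) * lb * (1 - 2 * u / 3))) by ring. nra. }
    assert ((u ^ 2 * (1 - 2 * u / 3)) * (u * lb) <= g * r).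
    { apply Rmult_le_compat; try nra. }
    assert (0 < 1 + u + 2 * u * u) by nra. nra. }
  assert (E : - 1 * (1 + u) / u ^ 3 + (1 + u + 2 * u * u) / u ^ 3 = 2 / u) by (field; lra).
  assert (2 / u <= 2 / r).
  { unfold Rdiv. apply Rmult_le_compat_l; [lra|]. apply Rinv_le_contravar; lra. }
  assert (2 / r <= 2 / sqrt (f - 1)).
  { unfold Rdiv. apply Rmult_le_compat_l; [lra|]. apply Rinv_le_contravar; lra. }
  lra.
Qed.

Lemma bound_lo f : 1 < f < phi (3/4) -> dd1 (-1) hlo f <= 4 / sqrt (f - 1).
Proof.
  intro Hf. destruct (hlo_spec f ltac:(lra)) as [H1 H2].
  assert (H34 : 3/4 < hlo f).
  { destruct (Rlt_or_le (3/4) (hlo f)) as [|Hc]; auto.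
    destruct (Rle_lt_or_eq_dec _ _ Hc) as [Hc'|Hc'].
    - apply phi_decr in Hc'; lra.
    - rewrite Hc' in H2. lra. }
  pose proof (L3 (hlo f) H1) as B3. pose proof (L4 (hlo f) ltac:(lra)) as B4.
  assert (Hg : gg (hlo f) = 2 * (f - 1)) by (rewrite gg_phi, H2; ring).
  unfold dd1.
  generalize (sqrt_fm1 f ltac:(lra)). intro Sf.
  assert (Sp1 : 0 < sqrt (f - 1)) by (apply sqrt_lt_R0; lra).
  rewrite <- Hg in *. unfold gg in *.
  set (H := hlo f) in *. clearbody H.
  set (u := 1 - H). assert (Hu : 0 < u <= 1/4) by (unfold u; lra).
  replace H with (1 - u) in * by (unfold u; ring). clearbody u.
  replace (1 - u - 1) with (- u) in * by ring.
  replace (1 - (1 - u)) with u in * by ring.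
  set (g := 2 * (- u - ln (1 - u))) in *.
  assert (G1 : u ^ 2 * (1 + 2 * u / 3) <= g) by (unfold g; lra).
  assert (G2 : g < 4 * u ^ 2).
  { unfold g. assert (u ^ 4 <= u ^ 2 * (1/4)^2).
    { replace (u^4) with (u^2 * u^2) by ring. apply Rmult_le_compat_l; [apply pow_le; lra|]. apply pow_incr; lra. }
    assert (u ^ 3 <= u ^ 2 * (1/4)).
    { replace (u^3) with (u^2 * u) by ring. apply Rmult_le_compat_l; [apply pow_le; lra|]. lra. }
    assert (0 < u^2) by (apply pow_lt; lra). lra. }
  clearbody g.
  assert (u2 : 0 < u ^ 2) by (apply pow_lt; lra).
  assert (gp : 0 < g) by nra.
  set (lb := 1 + u / 3 - u * u / 9).
  assert (lbp : 0 < lb) by (unfold lb; nra).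
  assert (lb2 : lb * lb <= 1 + 2 * u / 3) by (apply polyD; auto).
  assert (Pa : 1 <= (1 - u + 2 * u * u) * lb * (1 + 2 * u / 3)) by (apply polyB; auto).
  clearbody lb.
  assert (r1 : u * lb <= sqrt g) by (apply sqrt_ge_of; nra).
  assert (r2 : sqrt g < 2 * u) by (apply sqrt_lt_of; nra).
  assert (rp : 0 < sqrt g) by (apply sqrt_lt_R0; auto).
  set (r := sqrt g) in *. clearbody r.
  assert (u3 : 0 < u ^ 3) by (apply pow_lt; lra).
  assert (I : / (g * r) <= (1 - u + 2 * u * u) / u ^ 3).
  { apply inv_le_frac; [nra|auto|].
    assert (u ^ 3 <= (1 - u + 2 * u * u) * (u ^ 2 * (1 + 2 * u / 3)) * (u * lb)).
    { replace ((1 - u + 2 * u * u) * (u ^ 2 * (1 + 2 * u / 3)) * (u * lb)) with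
        (u ^ 3 * ((1 - u + 2 * u * u) * lb * (1 + 2 * u / 3))) by ring. nra. }
    assert ((u ^ 2 * (1 + 2 * u / 3)) * (u * lb) <= g * r).
    { apply Rmult_le_compat; try nra. }
    assert (0 < 1 - u + 2 * u * u) by nra. nra. }
  assert (E : - -1 * (1 - u) / (- u) ^ 3 + (1 - u + 2 * u * u) / u ^ 3 = 2 / u) by (field; lra).
  assert (2 / u <= 4 / r).
  { replace (4 / r) with (2 / (r / 2)) by (field; lra).
    unfold Rdiv. apply Rmult_le_compat_l; [lra|]. apply Rinv_le_contravar; lra. }
  assert (4 / r <= 4 / sqrt (f - 1)).
  { unfold Rdiv. apply Rmult_le_compat_l; [lra|]. apply Rinv_le_contravar; lra. }
  lra.
Qed.

Lemma up_signs f : 1 < f -> 0 < dd1 1 hup f /\ dd2 1 hup f < 0.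
Proof.
  intro Hf. destruct (hup_spec f Hf).
  apply (signs 1 hup f (hup f - 1)); auto using Kprop_hup; lra.
Qed.

Lemma lo_signs f : 1 < f -> 0 < dd1 (-1) hlo f /\ dd2 (-1) hlo f < 0.
Proof.
  intro Hf. destruct (hlo_spec f Hf).
  apply (signs (-1) hlo f (1 - hlo f)); auto using Kprop_hlo; lra.
Qed.

Lemma Djup f : 1 < f -> is_derive jup f (dd1 1 hup f).
Proof. intro. rewrite jup_eq. apply jj_deriv; auto using Kprop_hup. Qed.

Lemma Djlo f : 1 < f -> is_derive jlo f (dd1 (-1) hlo f).
Proof. intro. rewrite jlo_eq. apply jj_deriv; auto using Kprop_hlo. Qed.

Lemma DDjup f : 1 < f -> is_derive (Derive jup) f (dd2 1 hup f).
Proof. intro. rewrite jup_eq. apply Derive2_jj; auto using Kprop_hup. Qed.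

Lemma DDjlo f : 1 < f -> is_derive (Derive jlo) f (dd2 (-1) hlo f).
Proof. intro. rewrite jlo_eq. apply Derive2_jj; auto using Kprop_hlo. Qed.

Lemma Djsum f : 1 < f -> is_derive jsum f (dd1 1 hup f + dd1 (-1) hlo f).
Proof.
  intro Hf. apply is_derive_Reals. unfold jsum.
  apply dpl_plus with (dd1 1 hup f) (dd1 (-1) hlo f); auto.
  - apply is_derive_Reals, Djup; auto.
  - apply is_derive_Reals, Djlo; auto.
Qed.

Lemma DDjsum f : 1 < f -> is_derive (Derive jsum) f (dd2 1 hup f + dd2 (-1) hlo f).
Proof.
  intro Hf. apply is_derive_ext_loc with (fun t => dd1 1 hup t + dd1 (-1) hlo t).
  - apply filter_imp with (fun t => 1 < t); [|apply loc_gt1; auto].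
    intros t Ht. symmetry. apply is_derive_unique, Djsum; auto.
  - apply is_derive_Reals.
    apply dpl_plus with (dd2 1 hup f) (dd2 (-1) hlo f); auto.
    + apply is_derive_Reals, d1_deriv; auto using Kprop_hup.
    + apply is_derive_Reals, d1_deriv; auto using Kprop_hlo.
Qed.

Lemma bigO_up : bigO_inv_sqrt_at1 (Derive jup).
Proof.
  assert (Hd : phi 1 < phi (5/4)) by (apply phi_incr; lra). rewrite phi_1 in Hd.
  exists 4, (phi (5/4) - 1). split; [lra|]. intros f Hf.
  rewrite (is_derive_unique _ _ _ (Djup f ltac:(lra))).
  destruct (up_signs f ltac:(lra)) as [P _]. rewrite Rabs_pos_eq by lra.
  pose proof (bound_up f ltac:(lra)).
  assert (0 < / sqrt (f - 1)) by (apply Rinv_0_lt_compat, sqrt_lt_R0; lra).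
  unfold Rdiv in H. lra.
Qed.

Lemma bigO_lo : bigO_inv_sqrt_at1 (Derive jlo).
Proof.
  assert (Hd : phi 1 < phi (3/4)) by (apply phi_decr; lra). rewrite phi_1 in Hd.
  exists 4, (phi (3/4) - 1). split; [lra|]. intros f Hf.
  rewrite (is_derive_unique _ _ _ (Djlo f ltac:(lra))).
  destruct (lo_signs f ltac:(lra)) as [P _]. rewrite Rabs_pos_eq by lra.
  pose proof (bound_lo f ltac:(lra)).
  unfold Rdiv in H. lra.
Qed.

Lemma bigO_sum : bigO_inv_sqrt_at1 (Derive jsum).
Proof.
  destruct bigO_up as [C1 [e1 [Hd1 B1]]].
  destruct bigO_lo as [C2 [e2 [Hd2 B2]]].
  exists (C1 + C2), (Rmin e1 e2). split; [apply Rmin_glb_lt; auto|]. intros f Hf.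
  assert (f < 1 + e1) by (pose proof (Rmin_l e1 e2); lra).
  assert (f < 1 + e2) by (pose proof (Rmin_r e1 e2); lra).
  rewrite (is_derive_unique _ _ _ (Djsum f ltac:(lra))).
  rewrite <- (is_derive_unique _ _ _ (Djup f ltac:(lra))).
  rewrite <- (is_derive_unique _ _ _ (Djlo f ltac:(lra))).
  eapply Rle_trans; [apply Rabs_triang|].
  specialize (B1 f ltac:(lra)). specialize (B2 f ltac:(lra)). lra.
Qed.

Lemma jsum_lim : filterlim jsum (at_right 1) (locally 0).
Proof.
  unfold jsum.
  apply (filterlim_comp_2 jup jlo (fun a b => a + b) (G := Rbar_locally (-(1/3))) (H := Rbar_locally (1/3))).
  - apply jup_lim.
  - apply jlo_lim.
  - change (locally 0) with (Rbar_locally 0).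
    apply filterlim_Rbar_plus. unfold is_Rbar_plus. simpl. f_equal. f_equal. lra.
Qed.

Lemma jsum_formula f : 1 < f -> jsum f = / (hup f - 1) + / (1 - hlo f) - sqrt (2 / (f - 1)).
Proof.
  intro Hf. unfold jsum, jup, jlo.
  assert (S := sqrt_sqrt (2 * (f - 1)) ltac:(lra)).
  assert (Sp := sqrt_lt_R0 (2 * (f - 1)) ltac:(lra)).
  set (s := sqrt (2 * (f - 1))) in *.
  assert (E : sqrt (2 / (f - 1)) = 2 / s).
  { replace (2 / (f - 1)) with ((2 / s) * (2 / s)).
    - apply sqrt_square. apply Rlt_le, Rdiv_lt_0_compat; lra.
    - clearbody s. replace (f - 1) with (s * s / 2) by lra. field. lra. }
  rewrite E. unfold Rdiv. ring.
Qed.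

Lemma jup_neg f : 1 < f -> jup f < 0.
Proof.
  intro Hf. destruct (hup_spec f Hf) as [H1 H2].
  pose proof (L5 (hup f) H1) as B.
  assert (Hg : gg (hup f) = 2 * (f - 1)) by (rewrite gg_phi, H2; ring).
  unfold jup. rewrite <- Hg. unfold gg in *.
  set (H := hup f) in *. clearbody H.
  assert (gp : 0 < 2 * (H - 1 - ln H)) by (rewrite Hg; lra).
  assert (sqrt (2 * (H - 1 - ln H)) < H - 1).
  { apply sqrt_lt_of; lra. }
  assert (0 < sqrt (2 * (H - 1 - ln H))) by (apply sqrt_lt_R0; auto).
  assert (/ (H - 1) < / sqrt (2 * (H - 1 - ln H))) by (apply Rinv_lt_contravar; nra).
  lra.
Qed.

Lemma jlo_lt1 f : 1 < f -> jlo f < 1.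
Proof.
  intro Hf. destruct (hlo_spec f Hf) as [H1 H2].
  pose proof (L6 (hlo f) H1) as B.
  assert (Hg : gg (hlo f) = 2 * (f - 1)) by (rewrite gg_phi, H2; ring).
  unfold jlo. rewrite <- Hg. unfold gg in *.
  set (H := hlo f) in *. clearbody H.
  assert (gp : 0 < 2 * (H - 1 - ln H)) by (rewrite Hg; lra).
  assert (G : 2 * (H - 1 - ln H) < (1 - H) / H * ((1 - H) / H)).
  { assert (2 * (H - 1 - ln H) < (1 - H) ^ 2 / H).
    { replace ((1 - H) ^ 2 / H) with (2 * (H - 1) + (/ H - H)) by (field; lra). lra. }
    assert ((1 - H) ^ 2 / H < (1 - H) / H * ((1 - H) / H)).
    { replace ((1 - H) / H * ((1 - H) / H)) with ((1 - H) ^ 2 / H * / H) by (field; lra).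
      assert (0 < (1 - H) ^ 2 / H) by (apply Rdiv_lt_0_compat; [apply pow_lt|]; lra).
      assert (1 < / H).
      { rewrite <- Rinv_1. apply Rinv_lt_contravar; lra. }
      nra. }
    lra. }
  assert (Q : 0 < (1 - H) / H) by (apply Rdiv_lt_0_compat; lra).
  assert (S : sqrt (2 * (H - 1 - ln H)) < (1 - H) / H) by (apply sqrt_lt_of; lra).
  assert (Sp : 0 < sqrt (2 * (H - 1 - ln H))) by (apply sqrt_lt_R0; auto).
  set (r := sqrt (2 * (H - 1 - ln H))) in *. clearbody r.
  assert (/ ((1 - H) / H) < / r) by (apply Rinv_lt_contravar; nra).
  replace (/ ((1 - H) / H)) with (/ (1 - H) - 1) in H0 by (field; lra).
  lra.
Qed.

Lemma jsum_incr x y : 1 < x -> x < y -> jsum x < jsum y.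
Proof.
  intros Hx Hxy.
  apply (incr_function jsum (Finite 1) p_infty (fun f => dd1 1 hup f + dd1 (-1) hlo f)); simpl; auto; try lra.
  - intros t Ht _. apply Djsum; auto.
  - intros t Ht _. destruct (up_signs t Ht), (lo_signs t Ht). lra.
Qed.

Lemma jsum_nonneg y : 1 < y -> 0 <= jsum y.
Proof.
  intro Hy. destruct (Rle_or_lt 0 (jsum y)) as [|Hn]; auto. exfalso.
  pose proof jsum_lim as L.
  assert (Hev : at_right 1 (fun t => Rabs (jsum t - 0) < - jsum y)).
  { pose proof (proj1 (filterlim_locally (F := at_right 1) jsum 0) L (mkposreal (- jsum y) ltac:(lra))) as L'.
    eapply filter_imp; [|exact L']. intros t Ht. apply ball_R in Ht. exact Ht. }
  destruct Hev as [eps He].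
  set (t := Rmin y (1 + eps / 2)).
  assert (Ht : 1 < t <= y).
  { unfold t, Rmin. destruct eps as [e Hep]. simpl. destruct (Rle_dec y (1 + e/2)); lra. }
  assert (Hb : ball 1 eps t).
  { apply ball_R'. unfold t, Rmin. destruct eps as [e Hep]. simpl in *.
    destruct (Rle_dec y (1 + e/2)); rewrite Rabs_pos_eq; lra. }
  specialize (He t Hb (proj1 Ht)).
  assert (jsum t <= jsum y).
  { destruct (Rle_lt_or_eq_dec _ _ (proj2 Ht)) as [Hlt|Heq].
    - left. apply jsum_incr; lra.
    - rewrite Heq. lra. }
  rewrite Rminus_0_r in He. apply Rabs_def2 in He. lra.
Qed.

Lemma jsum_bounds f : 1 < f -> 0 < jsum f < 1.
Proof.
  intro Hf. split.
  - assert (1 < (1 + f) / 2) by lra.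
    pose proof (jsum_nonneg ((1 + f) / 2) H).
    pose proof (jsum_incr ((1 + f) / 2) f H ltac:(lra)). lra.
  - unfold jsum. pose proof (jup_neg f Hf). pose proof (jlo_lt1 f Hf). lra.
Qed.

Theorem lemma2p3 :
  (* (a) *)
  filterlim jup (at_right 1) (locally (-(1/3))) /\
  filterlim jlo (at_right 1) (locally (1/3)) /\
  (* (b) *)
  (forall f, 1 < f -> ex_derive jup f /\ 0 < Derive jup f) /\
  (forall f, 1 < f -> ex_derive jlo f /\ 0 < Derive jlo f) /\
  bigO_inv_sqrt_at1 (Derive jup) /\
  bigO_inv_sqrt_at1 (Derive jlo) /\
  (* (c) *)
  (forall f, 1 < f -> ex_derive (Derive jup) f /\ Derive (Derive jup) f < 0) /\
  (forall f, 1 < f -> ex_derive (Derive jlo) f /\ Derive (Derive jlo) f < 0) /\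
  (* (d) *)
  (forall f, 1 < f ->
     jsum f = / (hup f - 1) + / (1 - hlo f) - sqrt (2 / (f - 1))) /\
  (forall f, 1 < f -> ex_derive jsum f /\ 0 < Derive jsum f) /\
  (forall f, 1 < f -> ex_derive (Derive jsum) f /\ Derive (Derive jsum) f < 0) /\
  filterlim jsum (at_right 1) (locally 0) /\
  bigO_inv_sqrt_at1 (Derive jsum) /\
  (* (e) *)
  (forall f, 1 < f -> 0 < jsum f < 1).
Proof.
  split; [exact jup_lim|].
  split; [exact jlo_lim|].
  split.
  { intros f Hf. split; [eexists; apply Djup; auto|].
    rewrite (is_derive_unique _ _ _ (Djup f Hf)). apply up_signs; auto. }
  split.
  { intros f Hf. split; [eexists; apply Djlo; auto|].
    rewrite (is_derive_unique _ _ _ (Djlo f Hf)). apply lo_signs; auto. }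
  split; [exact bigO_up|].
  split; [exact bigO_lo|].
  split.
  { intros f Hf. split; [eexists; apply DDjup; auto|].
    rewrite (is_derive_unique _ _ _ (DDjup f Hf)). apply up_signs; auto. }
  split.
  { intros f Hf. split; [eexists; apply DDjlo; auto|].
    rewrite (is_derive_unique _ _ _ (DDjlo f Hf)). apply lo_signs; auto. }
  split; [exact jsum_formula|].
  split.
  { intros f Hf. split; [eexists; apply Djsum; auto|].
    rewrite (is_derive_unique _ _ _ (Djsum f Hf)).
    destruct (up_signs f Hf), (lo_signs f Hf). lra. }
  split.
  { intros f Hf. split; [eexists; apply DDjsum; auto|].
    rewrite (is_derive_unique _ _ _ (DDjsum f Hf)).
    destruct (up_signs f Hf), (lo_signs f Hf). lra. }
  split; [exact jsum_lim|].
  split; [exact bigO_sum|].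
  exact jsum_bounds.
Qed.
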